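(* Let $X$ be a compact metric space and let $f\colon X\to X$ be an inner-distal homeomorphism. If every proximal cell $\mathcal{P}(x)$, $x\in X$, is a meagre subset of $X$, then the set of almost periodic points of $f$ is uncountable and $f$ has uncountably many stable classes.
   Context: The proximal cell of $x$ is $\mathcal{P}(x)=\{y\in X\colon \inf_{n\in\mathbb{Z}} d(f^n(x),f^n(y))=0\}$; $f$ is inner-distal if $\operatorname{Int}\mathcal{P}(x)=\emptyset$ for all $x$. A set is meagre if it is a countable union of nowhere-dense sets (sets whose closure has empty interior). A set $A\subseteq\mathbb{Z}$ is syndetic if $A+F=\mathbb{Z}$ for some finite $F\subseteq\mathbb{Z}$. A point $x$ is (pointwise) almost periodic if for every open neighborhood $U$ of $x$ the set $\{n\in\mathbb{Z}\colon f^n(x)\in U\}$ is syndetic. A stable class is a set of the form $W^s(x)=\{y\in X\colon \lim_{n\to\infty}d(f^n(x),f^n(y))=0\}$ for some $x\in X$. *)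

(* Defs.v *)
From Stdlib Require Import Reals ZArith List.
Open Scope R_scope.

Section MetricDefs.
Context {X : Type} (d : X -> X -> R).

Definition is_metric : Prop :=
  (forall x y, 0 <= d x y) /\
  (forall x y, d x y = 0 <-> x = y) /\
  (forall x y, d x y = d y x) /\
  (forall x y z, d x z <= d x y + d y z).

Definition ball (x : X) (r : R) : X -> Prop := fun y => d x y < r.

Definition is_open (U : X -> Prop) : Prop :=
  forall x, U x -> exists r, 0 < r /\ forall y, ball x r y -> U y.

Definition closure (A : X -> Prop) : X -> Prop :=
  fun x => forall r, 0 < r -> exists y, ball x r y /\ A y.

Definition interior (A : X -> Prop) : X -> Prop :=
  fun x => exists r, 0 < r /\ forall y, ball x r y -> A y.

Definition nowhere_dense (A : X -> Prop) : Prop :=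
  ~ (exists x, interior (closure A) x).

Definition meagre (A : X -> Prop) : Prop :=
  exists N : nat -> X -> Prop, (forall n, nowhere_dense (N n)) /\
    (forall x, A x <-> exists n, N n x).

Definition compact_space : Prop :=
  forall (I : Type) (U : I -> X -> Prop),
    (forall i, is_open (U i)) -> (forall x, exists i, U i x) ->
    exists l : list I, forall x, exists i, In i l /\ U i x.

Definition continuous_map (f : X -> X) : Prop :=
  forall x eps, 0 < eps -> exists delta, 0 < delta /\
    forall y, d x y < delta -> d (f x) (f y) < eps.

Definition homeomorphism (f g : X -> X) : Prop :=
  (forall x, g (f x) = x) /\ (forall x, f (g x) = x) /\
  continuous_map f /\ continuous_map g.

End MetricDefs.

Definition iterz {X : Type} (f g : X -> X) (n : Z) : X -> X :=
  match n with
  | Z0 => fun x => x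
  | Zpos p => Nat.iter (Pos.to_nat p) f
  | Zneg p => Nat.iter (Pos.to_nat p) g
  end.

(* proximal cell: inf_{n in Z} d(f^n x, f^n y) = 0 (d >= 0) *)
Definition proximal_cell {X : Type} (d : X -> X -> R) (f g : X -> X) (x : X)
  : X -> Prop :=
  fun y => forall eps, 0 < eps ->
    exists n : Z, d (iterz f g n x) (iterz f g n y) < eps.

Definition inner_distal {X : Type} (d : X -> X -> R) (f g : X -> X) : Prop :=
  forall x, ~ (exists z, interior d (proximal_cell d f g x) z).

Definition syndetic (A : Z -> Prop) : Prop :=
  exists F : list Z, forall m : Z, exists a k, A a /\ In k F /\ m = (a + k)%Z.

Definition almost_periodic {X : Type} (d : X -> X -> R) (f g : X -> X) (x : X)
  : Prop :=
  forall U : X -> Prop, is_open d U -> U x ->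
    syndetic (fun n => U (iterz f g n x)).

Definition stable_class {X : Type} (d : X -> X -> R) (f : X -> X) (x : X)
  : X -> Prop :=
  fun y => Un_cv (fun n => d (Nat.iter n f x) (Nat.iter n f y)) 0.

Definition countable_set {T : Type} (A : T -> Prop) : Prop :=
  exists h : T -> nat, forall a b, A a -> A b -> h a = h b -> a = b.

(* the family of stable classes is countable: there is a labelling of points
   by naturals such that equal labels give the same stable class *)
Definition countably_many_stable_classes {X : Type} (d : X -> X -> R)
  (f : X -> X) : Prop :=
  exists h : X -> nat, forall x y, h x = h y ->
    forall z, stable_class d f x z <-> stable_class d f y z.

(* Main.v *)
Require Import Defs.
From Stdlib Require Import Reals ZArith List Lia Lra Classical ClassicalEpsilon Cantor.
From mathcomp Require classical_sets.
Open Scope R_scope.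

Section Metric.
Variable X : Type.
Variable d : X -> X -> R.
Hypothesis Hm : is_metric d.

Lemma d_pos x y : 0 <= d x y.
Proof. destruct Hm as [H _]; apply H. Qed.
Lemma d_refl x : d x x = 0.
Proof. destruct Hm as [_ [H _]]; apply H; reflexivity. Qed.
Lemma d_eq x y : d x y = 0 -> x = y.
Proof. destruct Hm as [_ [H _]]; apply H. Qed.
Lemma d_sym x y : d x y = d y x.
Proof. destruct Hm as [_ [_ [H _]]]; apply H. Qed.
Lemma d_tri x y z : d x z <= d x y + d y z.
Proof. destruct Hm as [_ [_ [_ H]]]; apply H. Qed.

Definition closed (C : X -> Prop) :=
  forall y, (forall r, 0 < r -> exists c, C c /\ d y c < r) -> C y.

Lemma closed_closure A : closed (closure d A).
Proof.
  intros y H r Hr.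
  destruct (H (r/2)) as [c [Hc Hyc]]; [lra|].
  destruct (Hc (r/2)) as [a [Ha Hca]]; [lra|].
  exists a; split; auto. unfold ball in *.
  pose proof (d_tri y c a); lra.
Qed.

Lemma closed_open_compl C y : closed C -> ~ C y ->
  exists r, 0 < r /\ forall z, d y z < r -> ~ C z.
Proof.
  intros HC Hy. apply NNPP; intro H. apply Hy, HC.
  intros r Hr. apply NNPP; intro H2. apply H. exists r; split; auto.
  intros z Hz Cz. apply H2. exists z; auto.
Qed.

Lemma is_open_compl C : closed C -> is_open d (fun y => ~ C y).
Proof.
  intros HC y Hy. destruct (closed_open_compl C y HC Hy) as [r [Hr H]].
  exists r; split; auto.
Qed.

Lemma closed_compl U : is_open d U -> closed (fun y => ~ U y).
Proof.
  intros HU y H Uy. destruct (HU y Uy) as [r [Hr Hb]].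
  destruct (H r Hr) as [c [Hc Hyc]]. apply Hc, Hb. exact Hyc.
Qed.

Lemma closed_and A B : closed A -> closed B -> closed (fun y => A y /\ B y).
Proof.
  intros HA HB y H; split.
  - apply HA; intros r Hr; destruct (H r Hr) as [c [[Ac Bc] Hc]]; eauto.
  - apply HB; intros r Hr; destruct (H r Hr) as [c [[Ac Bc] Hc]]; eauto.
Qed.

Lemma le_eps a b : (forall e, 0 < e -> a < b + e) -> a <= b.
Proof.
  intros H. destruct (Rle_or_lt a b); auto.
  specialize (H (a - b) ltac:(lra)); lra.
Qed.

Lemma closed_cball z r : closed (fun y => d z y <= r).
Proof.
  intros y H. apply le_eps. intros e He.
  destruct (H e He) as [c [Hc Hyc]].
  pose proof (d_tri z c y). rewrite (d_sym c y) in H0. lra.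
Qed.

Lemma closed_forall (I : Type) (F : I -> X -> Prop) :
  (forall i, closed (F i)) -> closed (fun y => forall i, F i y).
Proof.
  intros HF y H i. apply HF. intros r Hr. destruct (H r Hr) as [c [Hc Hyc]]; eauto.
Qed.

Lemma closed_single c : closed (fun y => y = c).
Proof.
  intros y H. apply d_eq. apply Rle_antisym; [|apply d_pos].
  apply le_eps; intros e He. destruct (H e He) as [c' [-> Hc]]. lra.
Qed.

Lemma ball_open z r : is_open d (fun y => d z y < r).
Proof.
  intros y Hy. exists (r - d z y); split; [lra|].
  intros w Hw. unfold ball in Hw. pose proof (d_tri z y w). lra.
Qed.

Hypothesis Hc : compact_space d.

Lemma nested_inter (F : nat -> X -> Prop) :
  (forall n, closed (F n)) -> (forall n y, F (S n) y -> F n y) ->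
  (forall n, exists y, F n y) -> exists y, forall n, F n y.
Proof.
  intros HF Hn Hne. apply NNPP; intro H.
  assert (Hcov : forall y, exists n, ~ F n y).
  { intro y. apply NNPP; intro H2. apply H. exists y. intro n.
    apply NNPP; intro H3; apply H2; eauto. }
  destruct (Hc nat (fun n y => ~ F n y) (fun n => is_open_compl _ (HF n)) Hcov)
    as [l Hl].
  destruct (Hne (list_max l)) as [y Hy].
  destruct (Hl y) as [i [Hi Hiy]]. apply Hiy.
  assert (Hle : (i <= list_max l)%nat).
  { pose proof (proj1 (list_max_le l (list_max l)) (le_n _)) as HF'.
    rewrite Forall_forall in HF'. auto. }
  clear Hl Hi Hiy. induction Hle; auto.
Qed.

Lemma chain_smallest (I : Type) (S : I -> X -> Prop) (l : list I) (i0 : I) :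
  In i0 l ->
  (forall i j, (forall y, S i y -> S j y) \/ (forall y, S j y -> S i y)) ->
  exists i, In i l /\ forall j, In j l -> forall y, S i y -> S j y.
Proof.
  intros Hi0 Htot. revert i0 Hi0. induction l as [|a l IH]; intros i0 Hi0; [destruct Hi0|].
  destruct (classic (exists i, In i l)) as [[i Hi]|Hno].
  - destruct (IH i Hi) as [m [Hmm Hmin]].
    destruct (Htot a m) as [Ham|Hma].
    + exists a; split; [left; auto|]. intros j [<-|Hj] y Hy; auto.
    + exists m; split; [right; auto|]. intros j [<-|Hj] y Hy; auto.
  - exists a; split; [left; auto|]. intros j [<-|Hj] y Hy; auto.
    exfalso; eauto.
Qed.

Lemma chain_inter (I : Type) (S : I -> X -> Prop) (i0 : I) :
  (forall i, closed (S i)) -> (forall i, exists y, S i y) ->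
  (forall i j, (forall y, S i y -> S j y) \/ (forall y, S j y -> S i y)) ->
  exists y, forall i, S i y.
Proof.
  intros HS Hne Htot. apply NNPP; intro H.
  assert (Hcov : forall y, exists i, ~ S i y).
  { intro y. apply NNPP; intro H2. apply H. exists y. intro n.
    apply NNPP; intro H3; apply H2; eauto. }
  destruct (Hc I (fun i y => ~ S i y) (fun i => is_open_compl _ (HS i)) Hcov)
    as [l Hl].
  destruct (Hne i0) as [y0 _].
  destruct (Hl y0) as [i1 [Hi1 _]].
  destruct (chain_smallest I S l i1 Hi1 Htot) as [m [Hmm Hmin]].
  destruct (Hne m) as [y Hy]. destruct (Hl y) as [j [Hj Hjy]].
  apply Hjy, (Hmin j Hj y Hy).
Qed.

Lemma baire (K : X -> Prop) (C : nat -> X -> Prop) :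
  (exists z, K z) -> closed K -> (forall n, closed (C n)) ->
  (forall y, K y -> exists n, C n y) ->
  exists n z r, K z /\ 0 < r /\ forall y, K y -> d z y < r -> C n y.
Proof.
  intros [z0 Hz0] HK HC Hcov. apply NNPP; intro H.
  assert (Hst : forall n (p : {p : X * R | K (fst p) /\ 0 < snd p}),
    exists q : {p : X * R | K (fst p) /\ 0 < snd p},
      snd (proj1_sig q) <= snd (proj1_sig p) / 2 /\
      d (fst (proj1_sig p)) (fst (proj1_sig q)) < snd (proj1_sig p) / 2 /\
      forall y, d (fst (proj1_sig q)) y <= snd (proj1_sig q) -> ~ C n y).
  { intros n [[z r] [Kz Hr]]; simpl in *.
    assert (Hex : exists y, K y /\ d z y < r/2 /\ ~ C n y).
    { apply NNPP; intro H2. apply H. exists n, z, (r/2). split; auto. split; [lra|].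
      intros y Ky Hy. apply NNPP; intro H3. apply H2. exists y; repeat split; auto. }
    destruct Hex as [y [Ky [Hzy Hny]]].
    destruct (closed_open_compl _ y (HC n) Hny) as [rho [Hrho Hb]].
    assert (Hpos : 0 < Rmin (rho/2) (r/2)) by (apply Rmin_glb_lt; lra).
    exists (exist _ (y, Rmin (rho/2) (r/2)) (conj Ky Hpos)); simpl.
    split; [apply Rmin_r|]. split; auto.
    intros w Hw. apply Hb. pose proof (Rmin_l (rho/2) (r/2)). lra. }
  pose (step n p := proj1_sig (constructive_indefinite_description _ (Hst n p))).
  assert (Hr0 : K (fst (z0, 1)) /\ 0 < snd (z0, 1)) by (simpl; split; auto; lra).
  pose (p0 := exist (fun p : X * R => K (fst p) /\ 0 < snd p) (z0, 1) Hr0).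
  pose (sq := fix sq n := match n with O => p0 | S n => step n (sq n) end).
  pose (F n y := K y /\ d (fst (proj1_sig (sq n))) y <= snd (proj1_sig (sq n))).
  destruct (nested_inter F) as [y Hy].
  - intro n. apply closed_and; auto. apply closed_cball.
  - intros n y [Ky Hy]. split; auto. simpl in Hy.
    destruct (proj2_sig (constructive_indefinite_description _ (Hst n (sq n))))
      as [H1 [H2 _]].
    fold (step n (sq n)) in H1, H2.
    pose proof (d_tri (fst (proj1_sig (sq n))) (fst (proj1_sig (step n (sq n)))) y).
    lra.
  - intro n. destruct (proj2_sig (sq n)) as [Kz Hr]. exists (fst (proj1_sig (sq n))).
    split; auto. rewrite d_refl; lra.
  - destruct (Hy O) as [Ky _]. destruct (Hcov y Ky) as [n Cn].
    destruct (Hy (S n)) as [_ Hd]. simpl in Hd.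
    destruct (proj2_sig (constructive_indefinite_description _ (Hst n (sq n))))
      as [_ [_ H3]].
    fold (step n (sq n)) in H3. apply (H3 y Hd Cn).
Qed.

End Metric.

Section Iter.
Variable X : Type.
Variables f g : X -> X.
Hypothesis gf : forall x, g (f x) = x.
Hypothesis fg : forall x, f (g x) = x.

Lemma iterz_nat k y : iterz f g (Z.of_nat k) y = Nat.iter k f y.
Proof. destruct k; simpl; auto. rewrite SuccNat2Pos.id_succ; reflexivity. Qed.
Lemma iterz_negnat k y : iterz f g (- Z.of_nat k) y = Nat.iter k g y.
Proof. destruct k; simpl; auto. rewrite SuccNat2Pos.id_succ; reflexivity. Qed.

Lemma Z_cases (n : Z) : (exists k, n = Z.of_nat k) \/ (exists k, n = (- Z.of_nat (S k))%Z).
Proof.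
  destruct (Z_le_gt_dec 0 n).
  - left; exists (Z.to_nat n); lia.
  - right; exists (Z.to_nat (- n) - 1)%nat; lia.
Qed.

Lemma iterz_succ m y : f (iterz f g m y) = iterz f g (m + 1) y.
Proof.
  destruct (Z_cases m) as [[k ->]|[k ->]].
  - replace (Z.of_nat k + 1)%Z with (Z.of_nat (S k)) by lia.
    rewrite !iterz_nat; reflexivity.
  - replace (- Z.of_nat (S k) + 1)%Z with (- Z.of_nat k)%Z by lia.
    rewrite !iterz_negnat; simpl; auto.
Qed.

Lemma iterz_pred m y : g (iterz f g m y) = iterz f g (m - 1) y.
Proof.
  destruct (Z_cases m) as [[[|k] ->]|[k ->]].
  - reflexivity.
  - replace (Z.of_nat (S k) - 1)%Z with (Z.of_nat k) by lia.
    rewrite !iterz_nat; simpl; auto.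
  - replace (- Z.of_nat (S k) - 1)%Z with (- Z.of_nat (S (S k)))%Z by lia.
    rewrite !iterz_negnat; reflexivity.
Qed.

Lemma iterz_add n m y : iterz f g n (iterz f g m y) = iterz f g (n + m) y.
Proof.
  destruct (Z_cases n) as [[k ->]|[k ->]].
  - rewrite iterz_nat. induction k.
    + reflexivity.
    + simpl Nat.iter. rewrite IHk, iterz_succ. f_equal; lia.
  - rewrite iterz_negnat. induction (S k) as [|j IH].
    + reflexivity.
    + simpl Nat.iter. rewrite IH, iterz_pred. f_equal; lia.
Qed.

Lemma iterz_0 y : iterz f g 0 y = y.
Proof. reflexivity. Qed.

Lemma iterz_period a z : iterz f g a z = z -> forall k, iterz f g (a * k) z = z.
Proof.
  intros Ha.
  assert (Hn : forall k, iterz f g (a * Z.of_nat k) z = z).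
  { induction k. - replace (a * Z.of_nat 0)%Z with 0%Z by lia; reflexivity.
    - replace (a * Z.of_nat (S k))%Z with (a + a * Z.of_nat k)%Z by lia.
      rewrite <- iterz_add, IHk; auto. }
  intro k. destruct (Z_cases k) as [[j ->]|[j ->]]; auto.
  transitivity (iterz f g (a * - Z.of_nat (S j)) (iterz f g (a * Z.of_nat (S j)) z)).
  { rewrite Hn; reflexivity. }
  rewrite iterz_add.
  replace (a * - Z.of_nat (S j) + a * Z.of_nat (S j))%Z with 0%Z by lia.
  reflexivity.
Qed.

Lemma iterz_inv (P : X -> Prop) : (forall y, P y -> P (f y)) -> (forall y, P y -> P (g y)) ->
  forall n y, P y -> P (iterz f g n y).
Proof.
  intros Hf Hg n y Hy. destruct (Z_cases n) as [[k ->]|[k ->]].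
  - rewrite iterz_nat. induction k; simpl; auto.
  - rewrite iterz_negnat. induction (S k); simpl; auto.
Qed.
End Iter.

Section Dyn.
Variable X : Type.
Variable d : X -> X -> R.
Variables f g : X -> X.
Hypothesis Hm : is_metric d.
Hypothesis Hc : compact_space d.
Hypothesis Hh : homeomorphism d f g.

Lemma cont_comp (h1 h2 : X -> X) : continuous_map d h1 -> continuous_map d h2 ->
  continuous_map d (fun x => h1 (h2 x)).
Proof.
  intros C1 C2 x e He. destruct (C1 (h2 x) e He) as [d1 [Hd1 H1]].
  destruct (C2 x d1 Hd1) as [d2 [Hd2 H2]]. exists d2; split; auto.
Qed.

Lemma cont_id : continuous_map d (fun x => x).
Proof. intros x e He; exists e; split; auto. Qed.

Lemma cont_iter h k : continuous_map d h -> continuous_map d (Nat.iter k h).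
Proof.
  intro Ch; induction k; simpl.
  - apply cont_id.
  - apply (cont_comp h (Nat.iter k h)); auto.
Qed.

Lemma cont_iterz n : continuous_map d (iterz f g n).
Proof.
  destruct Hh as [_ [_ [Cf Cg]]].
  destruct n; simpl; [apply cont_id| apply cont_iter; auto | apply cont_iter; auto].
Qed.

Lemma open_pre U (phi : X -> X) : is_open d U -> continuous_map d phi ->
  is_open d (fun z => U (phi z)).
Proof.
  intros HU Cp z Hz. destruct (HU _ Hz) as [r [Hr Hb]].
  destruct (Cp z r Hr) as [de [Hde H]]. exists de; split; auto.
  intros y Hy. apply Hb, H, Hy.
Qed.

Lemma gfE x : g (f x) = x. Proof. apply Hh. Qed.
Lemma fgE x : f (g x) = x. Proof. apply Hh. Qed.

Definition good (K S : X -> Prop) :=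
  (exists y, S y) /\ closed X d S /\ (forall y, S y -> S (f y)) /\
  (forall y, S y -> S (g y)) /\ (forall y, S y -> K y).

Lemma good_ext K S T : (forall y, S y <-> T y) -> good K S -> good K T.
Proof.
  intros E [[y Sy] [Cl [If [Ig Sub]]]]. repeat split.
  - exists y; apply E; auto.
  - intros z H. apply E, Cl. intros r Hr. destruct (H r Hr) as [c [Tc Hzc]].
    exists c; split; auto; apply E; auto.
  - intros z Tz; apply E, If, E, Tz.
  - intros z Tz; apply E, Ig, E, Tz.
  - intros z Tz; apply Sub, E, Tz.
Qed.

Lemma closed_ext S T : (forall y, S y <-> T y) -> closed X d S -> closed X d T.
Proof.
  intros E Cl z H. apply E, Cl. intros r Hr. destruct (H r Hr) as [c [Tc Hzc]].
  exists c; split; auto; apply E; auto.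
Qed.

Lemma minimal_exists K : good K K ->
  exists M, good K M /\ forall S, good K S -> (forall y, S y -> M y) -> forall y, M y -> S y.
Proof.
  intros GK.
  destruct (classical_sets.Zorn_bigcup (P := fun B => good K (fun x => K x /\ ~ B x)))
    as [A [PA Amax]].
  - intros F FP Ftot.
    apply good_ext with (S := fun x => K x /\ forall B, F B -> ~ B x).
    { intro y. unfold classical_sets.bigcup, classical_sets.mkset. split.
      - intros [Ky H]; split; auto. intros [B FB HB]. apply (H B FB HB).
      - intros [Ky H]; split; auto. intros B FB HB. apply H. exists B; auto. }
    unfold good; split; [|split; [|split; [|split]]].
    + destruct (classic (exists B, F B)) as [[B0 FB0]|Hno].
      * destruct (chain_inter X d Hc _ (fun (i : {B | F B}) y => K y /\ ~ proj1_sig i y)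
          (exist _ B0 FB0)) as [y0 Hy0].
        -- intros [B FB]; simpl. apply (FP B FB).
        -- intros [B FB]; simpl. apply (FP B FB).
        -- intros [B1 F1] [B2 F2]; simpl.
           destruct (Ftot B1 B2 F1 F2) as [H|H]; [right|left]; intros y [Ky Hy]; split; auto.
        -- exists y0. split. { destruct (Hy0 (exist _ B0 FB0)); auto. }
           intros B FB. destruct (Hy0 (exist _ B FB)); auto.
      * destruct GK as [[y Ky] _]. exists y; split; auto. intros B FB; exfalso; eauto.
    + apply closed_ext with (S := fun y => K y /\ forall i : {B|F B}, K y /\ ~ proj1_sig i y).
      { intro y; split.
        - intros [Ky H]; split; auto; intros B FB; apply (H (exist _ B FB)).
        - intros [Ky H]; split; auto; intros [B FB]; simpl; auto. }
      apply closed_and; [apply GK|]. apply closed_forall. intros [B FB]; apply (FP B FB).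
    + intros y [Ky H]. split; [apply (proj1 (proj2 (proj2 GK))); auto|]. intros B FB.
      destruct (FP B FB) as [_ [_ [If _]]]. apply (If y (conj Ky (H B FB))).
    + intros y [Ky H]. split; [apply (proj1 (proj2 (proj2 (proj2 GK)))); auto|]. intros B FB.
      destruct (FP B FB) as [_ [_ [_ [Ig _]]]]. apply (Ig y (conj Ky (H B FB))).
    + intros y [Ky _]; auto.
  - exists (fun x => K x /\ ~ A x). split; auto.
    intros S GS Sub y My. apply NNPP; intro nSy.
    apply (Amax (fun x => ~ S x)).
    + unfold classical_sets.proper, classical_sets.subset. split.
      * intros t At St. destruct (Sub t St) as [_ nA]. auto.
      * intro H. destruct My as [Ky nAy]. apply nAy, H, nSy.
    + apply good_ext with (S := S); auto. intro z; split.
      * intro Sz; split; [apply (proj2 (proj2 (proj2 (proj2 GS)))); auto | intro; auto].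
      * intros [Kz nnS]; apply NNPP; auto.
Qed.

Lemma itadd n m y : iterz f g n (iterz f g m y) = iterz f g (n + m) y.
Proof. apply (iterz_add X f g gfE fgE). Qed.

Lemma it_inv (P : X -> Prop) : (forall y, P y -> P (f y)) -> (forall y, P y -> P (g y)) ->
  forall n y, P y -> P (iterz f g n y).
Proof. apply iterz_inv. Qed.

Section MinAP.
Variables K M : X -> Prop.
Hypothesis GM : good K M.
Hypothesis Min : forall S, good K S -> (forall y, S y -> M y) -> forall y, M y -> S y.

Lemma minimal_AP y : M y -> almost_periodic d f g y.
Proof.
  intros My U HU Uy.
  destruct GM as [_ [ClM [IfM [IgM SubM]]]].
  assert (Hall : forall z, M z -> exists n, U (iterz f g n z)).
  { apply NNPP; intro H.
    assert (Hex : exists z, M z /\ forall n, ~ U (iterz f g n z)).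
    { apply NNPP; intro H2. apply H. intros z Mz. apply NNPP; intro H3.
      apply H2. exists z; split; auto. intros n Hn. apply H3; eauto. }
    assert (GS : good K (fun z => M z /\ forall n, ~ U (iterz f g n z))).
    { unfold good; split; [|split; [|split; [|split]]].
      - exact Hex.
      - apply closed_and; auto.
        apply (closed_forall X d Z (fun n z => ~ U (iterz f g n z))).
        intro n. apply (closed_compl X d (fun z => U (iterz f g n z))).
        apply open_pre; auto. apply cont_iterz.
      - intros z [Mz Hz]. split; auto. intros n Hn. apply (Hz (n + 1)%Z).
        rewrite <- itadd. exact Hn.
      - intros z [Mz Hz]. split; auto. intros n Hn. apply (Hz (n + -1)%Z).
        rewrite <- itadd. exact Hn.
      - intros z [Mz _]; auto. }
    destruct (Min _ GS (fun z Hz => proj1 Hz) y My) as [_ Hy].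
    apply (Hy 0%Z). exact Uy. }
  destruct (Hc (option Z)
    (fun o => match o with None => fun z => ~ M z | Some n => fun z => U (iterz f g n z) end))
    as [l Hl].
  - intros [n|]. + apply open_pre; auto. apply cont_iterz. + apply is_open_compl; auto.
  - intro z. destruct (classic (M z)) as [Mz|nMz].
    + destruct (Hall z Mz) as [n Hn]. exists (Some n); auto.
    + exists None; auto.
  - exists (map (fun o => match o with Some n => (- n)%Z | None => 0%Z end) l).
    intro m. assert (Mm : M (iterz f g m y)) by (apply it_inv; auto).
    destruct (Hl (iterz f g m y)) as [[n|] [Hin Hu]]; [|contradiction].
    exists (n + m)%Z, (- n)%Z. split; [rewrite <- itadd; auto|]. split; [|lia].
    apply in_map_iff. exists (Some n); auto.
Qed.

Lemma sum_abs_bound (F : list Z) : (0 <= fold_right (fun k s => Z.abs k + s) 0 F)%Z /\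
  forall k, In k F -> (Z.abs k <= fold_right (fun k s => Z.abs k + s) 0 F)%Z.
Proof.
  induction F as [|a F [IH1 IH2]]; simpl; [split; [lia|tauto]|].
  split; [lia|]. intros k [->|H]. - lia. - specialize (IH2 k H). lia.
Qed.

Hypothesis hAP : X -> nat.
Hypothesis hinj : forall a b, almost_periodic d f g a -> almost_periodic d f g b ->
  hAP a = hAP b -> a = b.

Lemma periodic_point : exists z a, M z /\ (0 < a)%Z /\ iterz f g a z = z.
Proof.
  pose proof GM as [[z0 Mz0] [ClM [IfM [IgM SubM]]]].
  destruct (baire X d Hm Hc M (fun k y => M y /\ hAP y = k)) as [k [z [r [Mz [Hr Hb]]]]].
  - exists z0; auto.
  - exact ClM.
  - intros k y H. destruct (H 1 ltac:(lra)) as [c0 [[Mc0 hc0] _]].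
    assert (y = c0) as ->; [|split; auto].
    apply (closed_single X d Hm c0). intros r Hr. destruct (H r Hr) as [c [[Mc hc] Hyc]].
    exists c; split; auto. apply hinj; try apply minimal_AP; auto. congruence.
  - intros y My. exists (hAP y); auto.
  - assert (iso : forall y, M y -> d z y < r -> y = z).
    { intros y My Hy. destruct (Hb y My Hy) as [_ h1].
      assert (Hz : d z z < r) by (rewrite (d_refl X d Hm); lra).
      destruct (Hb z Mz Hz) as [_ h2]. apply hinj; try apply minimal_AP; auto. congruence. }
    assert (Hz : d z z < r) by (rewrite (d_refl X d Hm); lra).
    destruct (minimal_AP z Mz (fun y => d z y < r) (ball_open X d Hm z r) Hz) as [F HF].
    destruct (sum_abs_bound F) as [S0 SB].
    destruct (HF (1 + fold_right (fun k s => Z.abs k + s) 0 F)%Z) as [a [k' [Ua [Hk Hmeq]]]].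
    specialize (SB k' Hk).
    exists z, a. split; auto. split; [lia|].
    apply iso; auto. apply it_inv; auto.
Qed.

End MinAP.

Definition orb (x : X) := closure d (fun y => exists n, y = iterz f g n x).

Lemma good_orb x : good (orb x) (orb x).
Proof.
  destruct Hh as [_ [_ [Cf Cg]]].
  unfold good; split; [|split; [|split; [|split]]].
  - exists x. intros r Hr. exists x; split; [unfold ball; rewrite (d_refl X d Hm); lra|].
    exists 0%Z; reflexivity.
  - apply closed_closure; auto.
  - intros y Hy r Hr. destruct (Cf y r Hr) as [de [Hde H]].
    destruct (Hy de Hde) as [c [Hc' [n ->]]]. exists (f (iterz f g n x)).
    split; [apply H; exact Hc'|]. exists (1 + n)%Z. rewrite <- itadd; reflexivity.
  - intros y Hy r Hr. destruct (Cg y r Hr) as [de [Hde H]].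
    destruct (Hy de Hde) as [c [Hc' [n ->]]]. exists (g (iterz f g n x)).
    split; [apply H; exact Hc'|]. exists (-1 + n)%Z. rewrite <- itadd; reflexivity.
  - auto.
Qed.

Lemma finite_min (Q : Z -> R -> Prop) :
  (forall j e e', Q j e -> 0 < e' <= e -> Q j e') ->
  forall N : nat, (forall j, (0 <= j < Z.of_nat N)%Z -> exists e, 0 < e /\ Q j e) ->
  exists e, 0 < e /\ forall j, (0 <= j < Z.of_nat N)%Z -> Q j e.
Proof.
  intros Hmono N. induction N as [|N IH]; intros H.
  - exists 1; split; [lra|]. intros j Hj; lia.
  - destruct IH as [e1 [He1 H1]]. { intros j Hj; apply H; lia. }
    destruct (H (Z.of_nat N)) as [e2 [He2 H2]]; [lia|].
    exists (Rmin e1 e2); split; [apply Rmin_glb_lt; auto|].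
    intros j Hj. destruct (Z.eq_dec j (Z.of_nat N)) as [->|Hne].
    + apply (Hmono _ e2); auto. split; [apply Rmin_glb_lt; auto|apply Rmin_r].
    + apply (Hmono _ e1); [apply H1; lia|]. split; [apply Rmin_glb_lt; auto|apply Rmin_l].
Qed.

Lemma prox_periodic x z a : (0 < a)%Z -> iterz f g a z = z -> orb x z ->
  exists j, (0 <= j < a)%Z /\ proximal_cell d f g (iterz f g j z) x.
Proof.
  intros Ha Hp Hz. apply NNPP; intro H.
  destruct (finite_min (fun j e => forall n, ~ d (iterz f g n (iterz f g j z)) (iterz f g n x) < e))
    with (N := Z.to_nat a) as [e [He Hall]].
  - intros j e e' Hq He' n Hn. apply (Hq n). lra.
  - intros j Hj. apply NNPP; intro H2. apply H. exists j; split; [lia|].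
    intros e He. apply NNPP; intro H3. apply H2. exists e; split; auto.
    intros n Hn. apply H3; eauto.
  - destruct (Hz e He) as [c [Hzc [n ->]]].
    pose (j := ((- n) mod a)%Z).
    assert (Hj : (0 <= j < a)%Z) by (apply Z.mod_pos_bound; lia).
    apply (Hall j ltac:(lia) n).
    rewrite itadd.
    assert (E : (n + j = a * (- ((- n) / a)))%Z).
    { pose proof (Z.div_mod (- n) a ltac:(lia)). unfold j. lia. }
    rewrite E, (iterz_period X f g gfE fgE a z Hp). exact Hzc.
Qed.

End Dyn.

Lemma AP_cover (X : Type) (d : X -> X -> R) (f g : X -> X) :
  is_metric d -> compact_space d -> homeomorphism d f g ->
  forall hAP : X -> nat, (forall a b, almost_periodic d f g a -> almost_periodic d f g b ->
  hAP a = hAP b -> a = b) ->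
  forall x, exists q, almost_periodic d f g q /\ proximal_cell d f g q x.
Proof.
  intros Hm Hc Hh hAP hinj x.
  destruct (minimal_exists X d f g Hc (orb X d f g x) (good_orb X d f g Hm Hh x))
    as [M [GM Min]].
  destruct (periodic_point X d f g Hm Hc Hh (orb X d f g x) M GM Min hAP hinj)
    as [z [a [Mz [Ha Hp]]]].
  pose proof GM as [_ [_ [IfM [IgM SubM]]]].
  destruct (prox_periodic X d f g Hh x z a Ha Hp (SubM z Mz)) as [j [Hj Hpj]].
  exists (iterz f g j z). split; auto.
  apply (minimal_AP X d f g Hc Hh (orb X d f g x) M GM Min).
  apply (iterz_inv X f g); auto.
Qed.

Lemma no_cover (X : Type) (d : X -> X -> R) (f g : X -> X) :
  is_metric d -> compact_space d -> X ->
  (forall x, meagre d (proximal_cell d f g x)) ->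
  ~ exists y : nat -> X, forall z, exists k, proximal_cell d f g (y k) z.
Proof.
  intros Hm Hc x0 Hmea [y Hy].
  pose (Nf k := proj1_sig (constructive_indefinite_description _ (Hmea (y k)))).
  assert (spec : forall k, (forall j, nowhere_dense d (Nf k j)) /\
     (forall x, proximal_cell d f g (y k) x <-> exists j, Nf k j x)).
  { intro k. exact (proj2_sig (constructive_indefinite_description _ (Hmea (y k)))). }
  destruct (baire X d Hm Hc (fun _ => True)
     (fun n => closure d (Nf (fst (of_nat n)) (snd (of_nat n))))) as [n [z [r [_ [Hr Hb]]]]].
  - exists x0; auto.
  - intros u _; auto.
  - intro n. apply closed_closure; auto.
  - intros u _. destruct (Hy u) as [k Hk]. destruct (proj1 (proj2 (spec k) u) Hk) as [j Hj].
    exists (to_nat (k, j)). rewrite cancel_of_to; simpl.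
    intros r Hr. exists u; split; auto. unfold ball; rewrite (d_refl X d Hm); lra.
  - apply (proj1 (spec (fst (of_nat n))) (snd (of_nat n))).
    exists z, r; split; auto.
Qed.

Theorem theorem2p17 (X : Type) (d : X -> X -> R) (f g : X -> X) :
  is_metric d -> inhabited X -> compact_space d ->
  homeomorphism d f g ->
  inner_distal d f g ->
  (forall x, meagre d (proximal_cell d f g x)) ->
  ~ countable_set (almost_periodic d f g) /\
  ~ countably_many_stable_classes d f.
Proof.
  intros Hm [x0] Hc Hh _ Hmea. split.
  - intros [h hinj]. apply (no_cover X d f g Hm Hc x0 Hmea).
    exists (fun k => epsilon (inhabits x0) (fun q => almost_periodic d f g q /\ h q = k)).
    intro z. destruct (AP_cover X d f g Hm Hc Hh h hinj z) as [q [APq Pq]].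
    exists (h q).
    destruct (epsilon_spec (inhabits x0) (fun q' => almost_periodic d f g q' /\ h q' = h q)
      (ex_intro _ q (conj APq eq_refl))) as [A1 A2].
    rewrite (hinj _ _ A1 APq A2). exact Pq.
  - intros [h Hh2]. apply (no_cover X d f g Hm Hc x0 Hmea).
    exists (fun k => epsilon (inhabits x0) (fun q => h q = k)).
    intro z. exists (h z).
    pose proof (epsilon_spec (inhabits x0) (fun q' => h q' = h z) (ex_intro _ z eq_refl)) as E.
    set (w := epsilon (inhabits x0) (fun q => h q = h z)) in *.
    assert (Hs : stable_class d f w z).
    { apply (proj2 (Hh2 w z E z)). intros e He. exists O. intros n _.
      unfold R_dist. rewrite (d_refl X d Hm), Rminus_0_r, Rabs_R0. exact He. }
    intros e He. destruct (Hs e He) as [N HN]. specialize (HN N (le_n _)).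
    exists (Z.of_nat N). rewrite !(iterz_nat X f g).
    unfold R_dist in HN. rewrite Rminus_0_r in HN.
    pose proof (Rle_abs (d (Nat.iter N f w) (Nat.iter N f z))). lra.
Qed.
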